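(* Let $0<q<1$ and let $n,k$ be integers with $1\le n\le k$. Then \[ \sum_{\substack{s_1,\dots,s_n\ge1\\ s_1+\cdots+s_n=k}}\zeta[s_1+1,s_2,\dots,s_n] = \zeta[k+1], \] the sum being over all $n$-tuples of positive integers with sum $k$.
   Context: Fix $0<q<1$. For real $x$, $[x]_q := (1-q^x)/(1-q)$. For positive integers $s_1,\dots,s_N$ with $s_1>1$, $\zeta[s_1,\dots,s_N] := \sum_{k_1>\cdots>k_N>0}\prod_{j=1}^N q^{(s_j-1)k_j}/[k_j]_q^{s_j}$ (sum over positive integers). *)

(* Defs.v *)
From Stdlib Require Import Reals List Arith.
From Coquelicot Require Import Coquelicot.
Import ListNotations.
Open Scope R_scope.

Definition qint (q : R) (x : nat) : R := (1 - q ^ x) / (1 - q).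

Definition qterm (q : R) (s k : nat) : R := q ^ ((s - 1) * k) / (qint q k) ^ s.

(* truncated sum over M >= k_1 > k_2 > ... > k_N > 0 for index list [s_1;...;s_N] *)
Fixpoint qzeta_trunc (q : R) (s : list nat) (M : nat) : R :=
  match s with
  | [] => 1
  | s1 :: rest => sum_f_R0 (fun j => qterm q s1 (S j) * qzeta_trunc q rest j) (M - 1)
                  * (if (M =? 0)%nat then 0 else 1)
  end.

(* zeta[s_1,...,s_N] = lim_{M->oo} of the truncated sums (terms are >= 0, so
   this is the value of the series) *)
Definition qzeta (q : R) (s : list nat) : R := real (Lim_seq (qzeta_trunc q s)).

Definition qzeta_converges (q : R) (s : list nat) : Prop :=
  ex_finite_lim_seq (qzeta_trunc q s).

Fixpoint bounded_lists (n k : nat) : list (list nat) :=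
  match n with
  | O => [[]]
  | S n' => flat_map (fun a => map (cons a) (bounded_lists n' k)) (seq 1 k)
  end.

Definition list_sum_nat (l : list nat) : nat := fold_right Nat.add 0%nat l.

Definition compositions (n k : nat) : list (list nat) :=
  filter (fun l => Nat.eqb (list_sum_nat l) k) (bounded_lists n k).

Definition bump_first (l : list nat) : list nat :=
  match l with [] => [] | a :: r => S a :: r end.

(* Main.v *)
Require Import Defs.
From Stdlib Require Import Reals List Lra Lia.
From Coquelicot Require Import Coquelicot.
Import ListNotations.
Open Scope R_scope.

Lemma series_lim (a : nat -> R) (l : R) : is_series a l <-> is_lim_seq (sum_n a) l.
Proof. split; intro H; exact H. Qed.

Fixpoint sumR (f : nat -> R) (n : nat) : R :=
  match n with O => 0 | S m => sumR f m + f m end.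

Lemma sum_n_sumR (f : nat -> R) (n : nat) : sum_n f n = sumR f (S n).
Proof.
  induction n. rewrite sum_O. simpl. lra.
  rewrite sum_Sn, IHn. simpl. unfold plus. simpl. lra.
Qed.

Lemma sumR_ext (f g : nat -> R) (n : nat) : (forall i, (i < n)%nat -> f i = g i) -> sumR f n = sumR g n.
Proof. induction n; intros H; simpl. auto. rewrite IHn, H; auto. Qed.

Lemma sumR_plus (f g : nat -> R) n : sumR (fun i => f i + g i) n = sumR f n + sumR g n.
Proof. induction n; simpl; lra. Qed.

Lemma sumR_scal (c : R) (f : nat -> R) n : sumR (fun i => c * f i) n = c * sumR f n.
Proof. induction n; simpl; lra. Qed.

Lemma sumR_minus (f g : nat -> R) n : sumR (fun i => f i - g i) n = sumR f n - sumR g n.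
Proof. induction n; simpl; lra. Qed.

Lemma sumR_nonneg (f : nat -> R) n : (forall i, 0 <= f i) -> 0 <= sumR f n.
Proof. intros H; induction n; simpl. lra. specialize (H n). lra. Qed.

Lemma sumR_le (f g : nat -> R) n : (forall i, f i <= g i) -> sumR f n <= sumR g n.
Proof. intros H; induction n; simpl. lra. specialize (H n). lra. Qed.

Lemma sumR_swap (f : nat -> nat -> R) n m :
  sumR (fun i => sumR (fun j => f i j) m) n = sumR (fun j => sumR (fun i => f i j) n) m.
Proof.
  induction n; simpl. induction m; simpl; lra.
  rewrite IHn. rewrite <- sumR_plus. reflexivity.
Qed.

Lemma sumR_split (f : nat -> R) n m : sumR f (n + m) = sumR f n + sumR (fun i => f (n + i)%nat) m.
Proof. induction m; simpl. rewrite Nat.add_0_r. lra. rewrite Nat.add_succ_r. simpl. rewrite IHm. lra. Qed.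

Lemma sumR_zero (f : nat -> R) n : (forall i, (i < n)%nat -> f i = 0) -> sumR f n = 0.
Proof. induction n; intros H; simpl. auto. rewrite IHn, H; auto; lra. Qed.

Lemma sumR_mono (f : nat -> R) n m : (forall i, 0 <= f i) -> (n <= m)%nat -> sumR f n <= sumR f m.
Proof.
  intros H Hnm. replace m with (n + (m - n))%nat by lia. rewrite sumR_split.
  pose proof (sumR_nonneg (fun i => f (n+i)%nat) (m-n) ltac:(intros; apply H)). lra.
Qed.

Lemma isR_plus (a b : nat -> R) la lb : is_series a la -> is_series b lb ->
  is_series (fun n => a n + b n) (la + lb).
Proof. intros Ha Hb. exact (is_series_plus a b la lb Ha Hb). Qed.

Lemma isR_scal (c : R) (a : nat -> R) la : is_series a la -> is_series (fun n => c * a n) (c * la).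
Proof. intros Ha. exact (is_series_scal_l c a la Ha). Qed.

Lemma isR_minus (a b : nat -> R) la lb : is_series a la -> is_series b lb ->
  is_series (fun n => a n - b n) (la - lb).
Proof. intros Ha Hb. exact (is_series_minus a b la lb Ha Hb). Qed.

Lemma isR_ext (a b : nat -> R) l : (forall n, a n = b n) -> is_series a l -> is_series b l.
Proof. intros H Ha. exact (is_series_ext a b l H Ha). Qed.

Lemma isR_zero : is_series (fun _ => 0) 0.
Proof.
  apply series_lim. apply is_lim_seq_ext with (fun _ => 0).
  intros n. rewrite sum_n_sumR. rewrite sumR_zero; auto. apply is_lim_seq_const.
Qed.

Lemma isR_sum (f : nat -> nat -> R) (l : nat -> R) N :
  (forall j, is_series (f j) (l j)) -> is_series (fun n => sumR (fun j => f j n) N) (sumR l N).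
Proof.
  intros H. induction N; simpl. apply isR_zero. apply isR_plus; auto.
Qed.

Lemma lim_sumR (u : nat -> nat -> R) (l : nat -> R) N :
  (forall i, is_lim_seq (u i) (l i)) -> is_lim_seq (fun n => sumR (fun i => u i n) N) (sumR l N).
Proof.
  intros H. induction N; simpl. apply is_lim_seq_const. apply is_lim_seq_plus'; auto.
Qed.

Lemma series_le (a b : nat -> R) la lb : (forall n, a n <= b n) -> is_series a la -> is_series b lb -> la <= lb.
Proof.
  intros H Ha Hb. apply series_lim in Ha. apply series_lim in Hb.
  assert (Rbar_le la lb). { apply (is_lim_seq_le (sum_n a) (sum_n b)); auto.
    intros n. rewrite !sum_n_sumR. apply sumR_le; auto. }
  simpl in H0. auto.
Qed.

Lemma partial_le (a : nat -> R) l n : (forall i, 0 <= a i) -> is_series a l -> sumR a n <= l.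
Proof.
  intros H Ha. apply series_lim in Ha. destruct n. simpl.
  assert (0 <= l). { apply (series_le (fun _ => 0) a 0 l); auto. apply isR_zero. } lra.
  rewrite <- sum_n_sumR. pose proof (is_lim_seq_incr_compare (sum_n a) l Ha). apply H0.
  intros m. rewrite !sum_n_sumR. simpl. specialize (H (S m)). lra.
Qed.

Lemma term_le (a : nat -> R) l n : (forall i, 0 <= a i) -> is_series a l -> a n <= l.
Proof.
  intros H Ha. pose proof (partial_le a l (S n) H Ha). simpl in H0.
  pose proof (sumR_nonneg a n H). lra.
Qed.

Lemma sum_nonneg (a : nat -> R) l : (forall i, 0 <= a i) -> is_series a l -> 0 <= l.
Proof. intros H Ha. pose proof (term_le a l 0 H Ha). specialize (H 0%nat). lra. Qed.

Lemma fubini (a : nat -> nat -> R) (B : nat -> R) (Sm : R) :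
  (forall i j, 0 <= a i j) -> (forall i, is_series (a i) (B i)) -> is_series B Sm ->
  (forall j, ex_series (fun i => a i j)) /\ is_series (fun j => Series (fun i => a i j)) Sm.
Proof.
  intros Ha Hrow HS.
  assert (HB : forall i, 0 <= B i). { intros i. apply (sum_nonneg (a i)); auto. }
  assert (Hcol : forall j, ex_series (fun i => a i j)).
  { intros j. apply (ex_series_le (fun i => a i j) B). intros i.
    unfold norm; simpl. unfold abs; simpl. rewrite Rabs_pos_eq by auto.
    apply (term_le (a i)); auto. exists Sm; auto. }
  split; auto.
  set (A := fun j => Series (fun i => a i j)).
  assert (HA : forall j, is_series (fun i => a i j) (A j)) by (intros; apply Series_correct; auto).
  assert (HA0 : forall j, 0 <= A j). { intros j. apply (sum_nonneg (fun i => a i j)); auto. }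
  assert (Hp : forall J, is_series (fun i => sumR (fun j => a i j) J) (sumR A J)).
  { intros J. apply (isR_sum (fun j i => a i j) A J). auto. }
  assert (Hbd : forall J, sumR A J <= Sm).
  { intros J. apply (series_le (fun i => sumR (fun j => a i j) J) B); auto.
    intros i. apply (partial_le (a i)); auto. }
  assert (Hinc : forall n, sum_n A n <= sum_n A (S n)).
  { intros n. rewrite !sum_n_sumR. simpl. specialize (HA0 (S n)). lra. }
  assert (Hex : ex_finite_lim_seq (sum_n A)).
  { apply (ex_finite_lim_seq_incr _ Sm Hinc). intros n. rewrite sum_n_sumR. auto. }
  destruct Hex as [Lm HLm].
  assert (HLmS : Lm <= Sm).
  { assert (Rbar_le Lm Sm). apply (is_lim_seq_le (sum_n A) (fun _ => Sm)); auto.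
    intros n; rewrite sum_n_sumR; auto. apply is_lim_seq_const. simpl in H; auto. }
  assert (HSLm : Sm <= Lm).
  { apply series_lim in HS.
    assert (Rbar_le Sm Lm). apply (is_lim_seq_le (sum_n B) (fun _ => Lm)); auto.
    2: apply is_lim_seq_const.
    intros I. rewrite sum_n_sumR.
    assert (Hl : is_lim_seq (fun J => sumR (fun i => sumR (fun j => a i j) (S J)) (S I)) (sumR B (S I))).
    { apply (lim_sumR (fun i J => sumR (fun j => a i j) (S J)) B). intros i.
      specialize (Hrow i). apply series_lim in Hrow.
      apply is_lim_seq_ext with (sum_n (a i)); auto. intros; apply sum_n_sumR. }
    assert (Rbar_le (sumR B (S I)) Lm).
    { refine (is_lim_seq_le _ (sum_n A) _ _ _ Hl HLm). intros J.
      rewrite sum_n_sumR. apply (partial_le (fun i => sumR (fun j => a i j) (S J))); auto.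
      intros i; apply sumR_nonneg; auto. }
    simpl in H; auto. simpl in H; auto. }
  assert (Lm = Sm) by lra. subst Lm. apply series_lim. auto.
Qed.
Definition Dt (q t : R) (k : nat) : R := qint q k - t * q ^ k.
Definition xk (q : R) (k : nat) : R := q ^ k / qint q k.
Fixpoint Ft (q t : R) (n : nat) : R :=
  match n with O => 1 | S m => Ft q t m * Dt q t (S m) end.
Definition Cc (q t : R) (m l : nat) : R := q ^ (m * l) * Ft q t m * Ft q t l / Ft q t (m + l).

Lemma pow_1_le (q : R) (k : nat) : 0 <= q <= 1 -> q ^ k <= 1.
Proof. intros Hq. induction k; simpl. lra. pose proof (pow_le q k ltac:(lra)). nra. Qed.

Lemma pow_le_q (q : R) (k : nat) : 0 < q < 1 -> (1 <= k)%nat -> q ^ k <= q.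
Proof.
  intros Hq Hk. destruct k as [|k]; [lia|]. simpl.
  assert (0 <= q ^ k <= 1). { split. apply pow_le; lra. apply pow_1_le; lra. } nra.
Qed.

Lemma qint_ge1 (q : R) (k : nat) : 0 < q < 1 -> (1 <= k)%nat -> 1 <= qint q k.
Proof.
  intros Hq Hk. unfold qint. pose proof (pow_le_q q k Hq Hk).
  apply Rmult_le_reg_r with (1 - q); [lra|]. unfold Rdiv. rewrite Rmult_assoc, Rinv_l; lra.
Qed.

Lemma Dt_ge (q t : R) (k : nat) : 0 < q < 1 -> 0 <= t -> (1 <= k)%nat -> 1 - t <= Dt q t k.
Proof.
  intros Hq Ht Hk. unfold Dt. pose proof (qint_ge1 q k Hq Hk).
  assert (0 <= q ^ k <= 1). { split. apply pow_le; lra. apply pow_1_le; lra. } nra.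
Qed.

Lemma qint_add (q : R) (m l : nat) : 0 < q < 1 -> qint q (m + l) - q ^ l * qint q m = qint q l.
Proof. intros Hq. unfold qint. rewrite pow_add. field. lra. Qed.

Lemma Dt_add (q t : R) (m l : nat) : 0 < q < 1 -> Dt q t (m + l) - q ^ l * Dt q t m = qint q l.
Proof. intros Hq. unfold Dt. rewrite <- (qint_add q m l Hq). rewrite pow_add. ring. Qed.

Lemma Dt_mono (q t : R) (k : nat) : 0 < q < 1 -> 0 <= t -> Dt q t k <= Dt q t (S k).
Proof.
  intros Hq Ht.
  assert (E : Dt q t (S k) - Dt q t k = q ^ k * (1 + t * (1 - q))).
  { unfold Dt, qint. simpl. field. lra. }
  pose proof (pow_le q k ltac:(lra)).
  assert (0 <= q ^ k * (1 + t * (1 - q))) by (apply Rmult_le_pos; nra). lra.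
Qed.

Lemma Dt_mono_le (q t : R) (a b : nat) : 0 < q < 1 -> 0 <= t -> (a <= b)%nat -> Dt q t a <= Dt q t b.
Proof.
  intros Hq Ht Hab. induction Hab. lra. eapply Rle_trans; [apply IHHab|]. apply Dt_mono; auto.
Qed.

Lemma Ft_pos (q t : R) (n : nat) : 0 < q < 1 -> 0 <= t < 1 -> 0 < Ft q t n.
Proof.
  intros Hq Ht. induction n; simpl. lra.
  pose proof (Dt_ge q t (S n) Hq (proj1 Ht) ltac:(lia)). nra.
Qed.

Lemma Cc_pos (q t : R) (m l : nat) : 0 < q < 1 -> 0 <= t < 1 -> 0 <= Cc q t m l.
Proof.
  intros Hq Ht. unfold Cc. pose proof (Ft_pos q t m Hq Ht). pose proof (Ft_pos q t l Hq Ht).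
  pose proof (Ft_pos q t (m+l) Hq Ht). pose proof (pow_le q (m*l) ltac:(lra)).
  apply Rmult_le_pos. apply Rmult_le_pos. nra. lra. left. apply Rinv_0_lt_compat. lra.
Qed.

Lemma Cc_sym (q t : R) (m l : nat) : Cc q t m l = Cc q t l m.
Proof. unfold Cc. replace (m*l)%nat with (l*m)%nat by lia. replace (m+l)%nat with (l+m)%nat by lia. unfold Rdiv. ring. Qed.

Lemma Cc_0 (q t : R) (l : nat) : 0 < q < 1 -> 0 <= t < 1 -> Cc q t 0 l = 1.
Proof. intros Hq Ht. unfold Cc. simpl. pose proof (Ft_pos q t l Hq Ht). field. lra. Qed.

Lemma Cc_S (q t : R) (m l : nat) : 0 < q < 1 -> 0 <= t < 1 ->
  Cc q t (S m) l = Cc q t m l * q ^ l * Dt q t (S m) / Dt q t (S (m + l)).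
Proof.
  intros Hq Ht. unfold Cc. simpl Ft. replace (S m * l)%nat with (l + m * l)%nat by lia.
  rewrite pow_add. replace (S m + l)%nat with (S (m + l)) by lia. simpl Ft.
  pose proof (Ft_pos q t (m+l) Hq Ht).
  pose proof (Dt_ge q t (S (m+l)) Hq (proj1 Ht) ltac:(lia)).
  field. lra.
Qed.

Lemma xk_pos (q : R) (k : nat) : 0 < q < 1 -> (1 <= k)%nat -> 0 < xk q k.
Proof.
  intros Hq Hk. unfold xk. pose proof (qint_ge1 q k Hq Hk). apply Rdiv_lt_0_compat; [apply pow_lt|]; lra.
Qed.

Lemma xk_le (q : R) (k : nat) : 0 < q < 1 -> (1 <= k)%nat -> xk q k <= q ^ k.
Proof.
  intros Hq Hk. unfold xk. pose proof (qint_ge1 q k Hq Hk). pose proof (pow_lt q k ltac:(lra)).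
  apply Rmult_le_reg_r with (qint q k); [lra|]. unfold Rdiv. rewrite Rmult_assoc, Rinv_l; nra.
Qed.

Lemma Cc_tele (q t : R) (m l : nat) : 0 < q < 1 -> 0 <= t < 1 -> (1 <= l)%nat ->
  Cc q t (S m) l / Dt q t (S m) = xk q l * (Cc q t m l - Cc q t (S m) l).
Proof.
  intros Hq Ht Hl. rewrite Cc_S by auto.
  pose proof (Dt_add q t (S m) l Hq). replace (S m + l)%nat with (S (m+l)) in H by lia.
  unfold xk. pose proof (qint_ge1 q l Hq Hl).
  pose proof (Dt_ge q t (S (m+l)) Hq (proj1 Ht) ltac:(lia)).
  pose proof (Dt_ge q t (S m) Hq (proj1 Ht) ltac:(lia)).
  rewrite <- H. field. split; lra.
Qed.

Lemma Cc_decr (q t : R) (m l : nat) : 0 < q < 1 -> 0 <= t < 1 -> (1 <= l)%nat ->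
  Cc q t (S m) l <= q * Cc q t m l.
Proof.
  intros Hq Ht Hl. rewrite Cc_S by auto.
  pose proof (Cc_pos q t m l Hq Ht). pose proof (pow_le_q q l Hq Hl).
  pose proof (Dt_ge q t (S (m+l)) Hq (proj1 Ht) ltac:(lia)).
  pose proof (Dt_ge q t (S m) Hq (proj1 Ht) ltac:(lia)).
  pose proof (Dt_mono_le q t (S m) (S (m+l)) Hq (proj1 Ht) ltac:(lia)).
  pose proof (pow_le q l ltac:(lra)).
  assert (Dt q t (S m) / Dt q t (S (m + l)) <= 1).
  { apply Rmult_le_reg_r with (Dt q t (S (m+l))); [lra|]. unfold Rdiv. rewrite Rmult_assoc, Rinv_l; lra. }
  assert (0 <= Dt q t (S m) / Dt q t (S (m + l))).
  { apply Rdiv_le_0_compat; lra. }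
  unfold Rdiv in *. rewrite Rmult_assoc. rewrite (Rmult_comm q). rewrite Rmult_assoc.
  apply Rmult_le_compat_l; [auto|]. nra.
Qed.

Lemma Cc_bound (q t : R) (m l : nat) : 0 < q < 1 -> 0 <= t < 1 -> (1 <= l)%nat ->
  Cc q t m l <= q ^ m.
Proof.
  intros Hq Ht Hl. induction m. rewrite Cc_0 by auto. simpl; lra.
  eapply Rle_trans. apply Cc_decr; auto. simpl. apply Rmult_le_compat_l; lra.
Qed.

Lemma series_finite (a : nat -> R) n : (forall j, (n <= j)%nat -> a j = 0) -> is_series a (sumR a n).
Proof.
  intros H. apply series_lim. apply (is_lim_seq_incr_n _ n).
  apply is_lim_seq_ext with (fun _ => sumR a n). 2: apply is_lim_seq_const.
  intros k. rewrite sum_n_sumR. replace (S (k + n)) with (n + S k)%nat by lia.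
  rewrite sumR_split. rewrite (sumR_zero (fun i => a (n+i)%nat)). lra. intros; apply H; lia.
Qed.

Lemma series_shift (a : nat -> R) n l : (forall i, (i < n)%nat -> a i = 0) ->
  is_series (fun k => a (n + k)%nat) l -> is_series a l.
Proof.
  intros H Hs. apply series_lim in Hs. apply series_lim.
  apply (is_lim_seq_incr_n _ n).
  apply is_lim_seq_ext with (fun k => sum_n (fun k0 => a (n + k0)%nat) k).
  2: exact Hs.
  intros k. rewrite !sum_n_sumR. replace (S (k + n)) with (n + S k)%nat by lia.
  rewrite sumR_split. rewrite (sumR_zero a n). lra. auto.
Qed.

Lemma pow_decr (q : R) (a b : nat) : 0 < q < 1 -> (a <= b)%nat -> q ^ b <= q ^ a.
Proof.
  intros Hq Hab. replace b with (a + (b - a))%nat by lia. rewrite pow_add.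
  pose proof (pow_1_le q (b-a) ltac:(lra)). pose proof (pow_le q a ltac:(lra)).
  pose proof (pow_le q (b-a) ltac:(lra)). nra.
Qed.

Lemma lim_le_geom (u : nat -> R) (q : R) : 0 < q < 1 -> (forall n, 0 <= u n <= q ^ n) -> is_lim_seq u 0.
Proof.
  intros Hq H. apply is_lim_seq_le_le with (fun _ => 0) (fun n => q ^ n). auto.
  apply is_lim_seq_const. apply is_lim_seq_geom. rewrite Rabs_pos_eq; lra.
Qed.

Lemma Cc_series (q t : R) (K l : nat) : 0 < q < 1 -> 0 <= t < 1 -> (1 <= l)%nat ->
  is_series (fun i => Cc q t (S (K + i)) l / Dt q t (S (K + i))) (xk q l * Cc q t K l).
Proof.
  intros Hq Ht Hl. apply series_lim.
  apply is_lim_seq_ext with (fun n => xk q l * (Cc q t K l - Cc q t (S (K + n)) l)).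
  { intros n. rewrite sum_n_sumR. symmetry.
    set (f := fun i => Cc q t (S (K + i)) l / Dt q t (S (K + i))). induction n as [|n IHn].
    simpl. unfold f. rewrite Nat.add_0_r. rewrite Cc_tele by auto. lra.
    replace (sumR f (S (S n))) with (sumR f (S n) + f (S n)) by reflexivity.
    rewrite IHn. unfold f. rewrite !Nat.add_succ_r. rewrite Cc_tele by auto. ring. }
  replace (xk q l * Cc q t K l) with (xk q l * (Cc q t K l - 0)) by ring.
  apply (is_lim_seq_scal_l _ (xk q l) (Cc q t K l - 0)).
  apply is_lim_seq_minus'. apply is_lim_seq_const.
  apply (lim_le_geom _ q Hq). intros n. split. apply Cc_pos; auto.
  eapply Rle_trans. apply Cc_bound; auto.
  apply pow_decr; auto; lia.
Qed.

Fixpoint Gt (q t : R) (d M : nat) : R :=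
  match d with O => 1 | S d' => sumR (fun j => / Dt q t (S j) * Gt q t d' j) M end.

Lemma Dt_pos (q t : R) (k : nat) : 0 < q < 1 -> 0 <= t < 1 -> (1 <= k)%nat -> 0 < Dt q t k.
Proof. intros Hq Ht Hk. pose proof (Dt_ge q t k Hq (proj1 Ht) Hk). lra. Qed.

Lemma Gt_nonneg (q t : R) d M : 0 < q < 1 -> 0 <= t < 1 -> 0 <= Gt q t d M.
Proof.
  intros Hq Ht. revert M. induction d; intros M; simpl. lra.
  apply sumR_nonneg. intros i. apply Rmult_le_pos; auto.
  left. apply Rinv_0_lt_compat. apply Dt_pos; auto; lia.
Qed.

Lemma W_series (q t : R) (d l : nat) : 0 < q < 1 -> 0 <= t < 1 -> (1 <= l)%nat ->
  is_series (fun i => Cc q t (S i) l / Dt q t (S i) * Gt q t d i) (xk q l ^ S d).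
Proof.
  intros Hq Ht Hl. induction d.
  - pose proof (Cc_series q t 0 l Hq Ht Hl). rewrite Cc_0 in H by auto.
    eapply isR_ext; [|replace (xk q l ^ 1) with (xk q l * 1) by ring; exact H].
    intros n. simpl. ring.
  - set (a := fun j i => if (j <? i)%nat then (Gt q t d j / Dt q t (S j)) * (Cc q t (S i) l / Dt q t (S i)) else 0).
    set (B := fun j => (Gt q t d j / Dt q t (S j)) * (xk q l * Cc q t (S j) l)).
    assert (Hpos : forall j i, 0 <= a j i).
    { intros j i. unfold a. destruct (j <? i)%nat. 2: lra.
      pose proof (Gt_nonneg q t d j Hq Ht). pose proof (Dt_pos q t (S j) Hq Ht ltac:(lia)).
      pose proof (Dt_pos q t (S i) Hq Ht ltac:(lia)). pose proof (Cc_pos q t (S i) l Hq Ht).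
      apply Rmult_le_pos; apply Rdiv_le_0_compat; lra. }
    assert (Hrow : forall j, is_series (a j) (B j)).
    { intros j. apply (series_shift _ (S j)).
      { intros i Hi. unfold a. destruct (Nat.ltb_spec j i). lia. auto. }
      pose proof (isR_scal (Gt q t d j / Dt q t (S j)) _ _ (Cc_series q t (S j) l Hq Ht Hl)).
      eapply isR_ext; [|exact H]. intros k. unfold a.
      destruct (Nat.ltb_spec j (S j + k)). reflexivity. lia. }
    assert (HB : is_series B (xk q l ^ S (S d))).
    { pose proof (isR_scal (xk q l) _ _ IHd). eapply isR_ext; [|exact H].
      intros n. unfold B. field. apply Rgt_not_eq. apply Dt_pos; auto; lia. }
    destruct (fubini a B _ Hpos Hrow HB) as [_ Hf].
    eapply isR_ext; [|exact Hf]. intros i. simpl.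
    rewrite (is_series_unique _ (sumR (fun j => a j i) i)).
    2: { apply series_finite. intros j Hj. unfold a. destruct (Nat.ltb_spec j i). lia. auto. }
    rewrite (sumR_ext _ (fun j => (Cc q t (S i) l / Dt q t (S i)) * (/ Dt q t (S j) * Gt q t d j))).
    rewrite sumR_scal. reflexivity.
    intros j Hj. unfold a. destruct (Nat.ltb_spec j i). 2: lia. unfold Rdiv. ring.
Qed.

Lemma Phi_eq (q t : R) (d : nat) (Sx : R) : 0 < q < 1 -> 0 <= t < 1 ->
  is_series (fun l => xk q (S l) ^ S d / Dt q t (S l)) Sx ->
  is_series (fun i => xk q (S i) * Gt q t d i / Dt q t (S i)) Sx.
Proof.
  intros Hq Ht HS.
  set (a := fun l i => Cc q t (S i) (S l) / Dt q t (S i) * Gt q t d i / Dt q t (S l)).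
  assert (Hpos : forall l i, 0 <= a l i).
  { intros l i. unfold a.
    pose proof (Gt_nonneg q t d i Hq Ht). pose proof (Dt_pos q t (S l) Hq Ht ltac:(lia)).
    pose proof (Dt_pos q t (S i) Hq Ht ltac:(lia)). pose proof (Cc_pos q t (S i) (S l) Hq Ht).
    apply Rdiv_le_0_compat; [|lra]. apply Rmult_le_pos; auto. apply Rdiv_le_0_compat; lra. }
  assert (Hrow : forall l, is_series (a l) (xk q (S l) ^ S d / Dt q t (S l))).
  { intros l. pose proof (isR_scal (/ Dt q t (S l)) _ _ (W_series q t d (S l) Hq Ht ltac:(lia))).
    eapply isR_ext; [|unfold Rdiv; rewrite Rmult_comm; exact H]. intros i. unfold a, Rdiv. ring. }
  destruct (fubini a _ _ Hpos Hrow HS) as [_ Hf].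
  eapply isR_ext; [|exact Hf]. intros i. simpl.
  apply is_series_unique.
  pose proof (isR_scal (Gt q t d i / Dt q t (S i)) _ _ (Cc_series q t 0 (S i) Hq Ht ltac:(lia))).
  rewrite Cc_0 in H by auto.
  eapply isR_ext; [|replace (xk q (S i) * Gt q t d i / Dt q t (S i)) with
     (Gt q t d i / Dt q t (S i) * (xk q (S i) * 1)) by (unfold Rdiv; ring); exact H].
  intros l. unfold a. simpl. rewrite (Cc_sym q t (S l) (S i)). unfold Rdiv. ring.
Qed.

Lemma ex_rhs (q t : R) (n : nat) : 0 < q < 1 -> 0 <= t < 1 -> (1 <= n)%nat ->
  ex_series (fun l => xk q (S l) ^ n / Dt q t (S l)).
Proof.
  intros Hq Ht Hn.
  apply (@ex_series_le R_AbsRing R_CompleteNormedModule _ (fun l => / (1 - t) * q ^ l)).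
  2: { apply (ex_series_scal_l (/ (1 - t)) (fun l => q ^ l)). apply ex_series_geom. rewrite Rabs_pos_eq; lra. }
  intros l. unfold norm; simpl; unfold abs; simpl.
  pose proof (xk_pos q (S l) Hq ltac:(lia)). pose proof (xk_le q (S l) Hq ltac:(lia)).
  pose proof (Dt_ge q t (S l) Hq (proj1 Ht) ltac:(lia)).
  assert (Hx1 : xk q (S l) <= q ^ l). { pose proof (pow_decr q l (S l) Hq ltac:(lia)). lra. }
  assert (Hxn : xk q (S l) ^ n <= xk q (S l)).
  { pose proof (pow_1_le q l ltac:(lra)). destruct n. lia. simpl. pose proof (pow_1_le (xk q (S l)) n ltac:(split; lra)).
    pose proof (pow_le (xk q (S l)) n ltac:(lra)). nra. }
  pose proof (pow_le (xk q (S l)) n ltac:(lra)).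
  rewrite Rabs_pos_eq. 2: { apply Rdiv_le_0_compat; lra. }
  unfold Rdiv. rewrite (Rmult_comm (/ (1 - t))). apply Rmult_le_compat; try lra.
  left; apply Rinv_0_lt_compat; lra. apply Rinv_le_contravar; lra.
Qed.
Fixpoint CS (d m : nat) (F : list nat -> R) : R :=
  match d with
  | O => if (m =? 0)%nat then F [] else 0
  | S d' => sumR (fun i => CS d' (m - S i) (fun l => F (S i :: l))) m
  end.

Lemma CS_ext d m F G : (forall l, F l = G l) -> CS d m F = CS d m G.
Proof.
  revert m F G. induction d; intros m F G H; simpl. rewrite H; auto.
  apply sumR_ext. intros i _. apply IHd. intros; apply H.
Qed.

Lemma CS_plus d m F G : CS d m (fun l => F l + G l) = CS d m F + CS d m G.
Proof.
  revert m F G. induction d; intros m F G; simpl. destruct (m =? 0)%nat; lra.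
  rewrite <- sumR_plus. apply sumR_ext. intros i _. apply IHd.
Qed.

Lemma CS_scal d m c F : CS d m (fun l => c * F l) = c * CS d m F.
Proof.
  revert m F. induction d; intros m F; simpl. destruct (m =? 0)%nat; lra.
  rewrite <- sumR_scal. apply sumR_ext. intros i _. apply IHd.
Qed.

Lemma CS_zero d m : CS d m (fun _ => 0) = 0.
Proof.
  revert m. induction d; intros m; simpl. destruct (m =? 0)%nat; auto.
  apply sumR_zero. intros; apply IHd.
Qed.

Lemma CS_sumR d m N (G : nat -> list nat -> R) :
  CS d m (fun l => sumR (fun j => G j l) N) = sumR (fun j => CS d m (G j)) N.
Proof.
  induction N; simpl. apply CS_zero. rewrite CS_plus. rewrite IHN. reflexivity.
Qed.

Lemma CS_minus d m F G : CS d m (fun l => F l - G l) = CS d m F - CS d m G.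
Proof.
  rewrite (CS_ext _ _ _ (fun l => F l + (-1) * G l)) by (intros; ring).
  rewrite CS_plus, CS_scal. ring.
Qed.

Lemma CS_nonneg d m F : (forall l, 0 <= F l) -> 0 <= CS d m F.
Proof.
  revert m F. induction d; intros m F H; simpl. destruct (m =? 0)%nat; auto; lra.
  apply sumR_nonneg. intros i. apply IHd. auto.
Qed.

Lemma CS_mono d m F G : (forall l, F l <= G l) -> CS d m F <= CS d m G.
Proof.
  intros H. pose proof (CS_nonneg d m (fun l => G l - F l) ltac:(intros l; specialize (H l); lra)).
  rewrite CS_minus in H0. lra.
Qed.

Lemma CS_small d m F : (m < d)%nat -> CS d m F = 0.
Proof.
  revert m F. induction d; intros m F H; simpl. lia.
  apply sumR_zero. intros i Hi. apply IHd. lia.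
Qed.

Lemma CS_shift d r F :
  CS (S d) (S d + r) F = sumR (fun e => CS d (d + (r - e)) (fun l => F (S e :: l))) (S r).
Proof.
  change (CS (S d) (S d + r) F) with
    (sumR (fun i => CS d (S d + r - S i) (fun l => F (S i :: l))) (S d + r)).
  set (f := fun i => CS d (S d + r - S i) (fun l => F (S i :: l))).
  assert (E : forall M, M = (S r + d)%nat -> sumR f M = sumR f (S r) + sumR (fun i => f (S r + i)%nat) d).
  { intros M ->. apply sumR_split. }
  rewrite (E (S d + r)%nat) by lia.
  rewrite (sumR_zero (fun i => f (S r + i)%nat) d).
  2: { intros i Hi. unfold f. apply CS_small. lia. }
  rewrite Rplus_0_r. apply sumR_ext. intros i Hi. unfold f. f_equal. lia.
Qed.

Lemma CS_one r F : CS 1 (S r) F = F [S r].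
Proof.
  simpl CS. simpl. rewrite (sumR_zero (fun i => if (r - i =? 0)%nat then F [S i] else 0)).
  2: { intros i Hi. destruct (Nat.eqb_spec (r - i) 0). lia. auto. }
  rewrite Nat.sub_diag. simpl. lra.
Qed.

Definition lsum (F : list nat -> R) (L : list (list nat)) : R := fold_right Rplus 0 (map F L).

Lemma lsum_app F L1 L2 : lsum F (L1 ++ L2) = lsum F L1 + lsum F L2.
Proof. induction L1; unfold lsum in *; simpl. lra. rewrite IHL1. lra. Qed.

Lemma sumR_shift1 (f : nat -> R) n : sumR f (S n) = f 0%nat + sumR (fun i => f (S i)) n.
Proof. induction n; simpl in *. lra. rewrite IHn. lra. Qed.

Lemma fold_seq (h : nat -> R) s K : fold_right Rplus 0 (map h (seq s K)) = sumR (fun i => h (s + i)%nat) K.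
Proof.
  revert s. induction K; intros s. simpl; auto. cbn [seq map fold_right]. rewrite IHK. rewrite sumR_shift1.
  rewrite Nat.add_0_r. f_equal. apply sumR_ext. intros; f_equal; lia.
Qed.

Lemma lsum_map_cons F a L : lsum F (map (cons a) L) = lsum (fun l => F (a :: l)) L.
Proof. induction L; unfold lsum in *; simpl; auto. rewrite IHL. auto. Qed.

Lemma filter_cons_map a m L :
  filter (fun l => (list_sum_nat l =? m)%nat) (map (cons a) L) =
  if (a <=? m)%nat then map (cons a) (filter (fun l => (list_sum_nat l =? m - a)%nat) L) else [].
Proof.
  induction L as [|x L IH]. simpl. destruct (a <=? m)%nat; auto.
  change (map (cons a) (x :: L)) with ((a :: x) :: map (cons a) L).
  change (filter (fun l => (list_sum_nat l =? m)%nat) ((a :: x) :: map (cons a) L)) with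
    (if (list_sum_nat (a :: x) =? m)%nat then (a :: x) :: filter (fun l => (list_sum_nat l =? m)%nat) (map (cons a) L)
     else filter (fun l => (list_sum_nat l =? m)%nat) (map (cons a) L)).
  change (list_sum_nat (a :: x)) with (a + list_sum_nat x)%nat.
  rewrite IH. destruct (Nat.leb_spec a m).
  - change (filter (fun l => (list_sum_nat l =? m - a)%nat) (x :: L)) with
    (if (list_sum_nat x =? m - a)%nat then x :: filter (fun l => (list_sum_nat l =? m - a)%nat) L
     else filter (fun l => (list_sum_nat l =? m - a)%nat) L).
    destruct (Nat.eqb_spec (a + list_sum_nat x) m); destruct (Nat.eqb_spec (list_sum_nat x) (m - a)); try lia; reflexivity.
  - destruct (Nat.eqb_spec (a + list_sum_nat x) m). lia. reflexivity.
Qed.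

Lemma comp_CS d m K F : (m <= K)%nat ->
  lsum F (filter (fun l => Nat.eqb (list_sum_nat l) m) (bounded_lists d K)) = CS d m F.
Proof.
  revert m F. induction d; intros m F HK.
  - simpl. destruct m; simpl; unfold lsum; simpl; lra.
  - simpl bounded_lists.
    assert (E : forall (L : list nat) (g : nat -> list (list nat)) (P : list nat -> bool),
      lsum F (filter P (flat_map g L)) = fold_right Rplus 0 (map (fun a => lsum F (filter P (g a))) L)).
    { intros L g P. induction L; simpl. reflexivity. rewrite filter_app, lsum_app, IHL. reflexivity. }
    rewrite E. rewrite fold_seq. simpl CS.
    set (f := fun i => lsum F (filter (fun l => (list_sum_nat l =? m)%nat)
                 (map (cons (1 + i)%nat) (bounded_lists d K)))).
    assert (E2 : sumR f K = sumR f m + sumR (fun i => f (m + i)%nat) (K - m)).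
    { rewrite <- sumR_split. f_equal. lia. }
    rewrite E2. clear E2.
    rewrite (sumR_zero (fun i => f (m + i)%nat)).
    2: { intros i Hi. unfold f. rewrite filter_cons_map.
      destruct (Nat.leb_spec (1 + (m + i)) m). lia. reflexivity. }
    rewrite Rplus_0_r. apply sumR_ext. intros i Hi. unfold f.
    rewrite filter_cons_map. destruct (Nat.leb_spec (1 + i) m). 2: lia.
    rewrite lsum_map_cons. rewrite <- IHd by lia. reflexivity.
Qed.

Lemma lsum_nonneg F L : (forall y, 0 <= F y) -> 0 <= lsum F L.
Proof. intros H. induction L; unfold lsum in *; simpl. lra. specialize (H a). lra. Qed.

Lemma lsum_in F L x : (forall y, 0 <= F y) -> In x L -> F x <= lsum F L.
Proof.
  intros H Hx. induction L; simpl in Hx. contradiction.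
  pose proof (lsum_nonneg F L H). pose proof (H a). unfold lsum in *; simpl.
  destruct Hx as [<-|Hx]. lra. specialize (IHL Hx). lra.
Qed.

Definition bumpp (p : nat) (l : list nat) : list nat :=
  match l with [] => [] | a :: r => (a + p)%nat :: r end.

Lemma bumpp0 l : bumpp 0 l = l.
Proof. destruct l; simpl; auto. rewrite Nat.add_0_r; auto. Qed.

Lemma sum_f_R0_sumR (f : nat -> R) m : sum_f_R0 f m = sumR f (S m).
Proof. induction m; simpl. lra. simpl in IHm. rewrite IHm. reflexivity. Qed.

Lemma qz_cons q s rest M :
  qzeta_trunc q (s :: rest) M = sumR (fun j => qterm q s (S j) * qzeta_trunc q rest j) M.
Proof.
  destruct M. simpl. apply Rmult_0_r. simpl qzeta_trunc.
  rewrite sum_f_R0_sumR. rewrite Nat.sub_0_r, Rmult_1_r. reflexivity.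
Qed.

Lemma qterm_nonneg q s k : 0 < q < 1 -> (1 <= k)%nat -> 0 <= qterm q s k.
Proof.
  intros Hq Hk. unfold qterm. pose proof (qint_ge1 q k Hq Hk).
  apply Rdiv_le_0_compat. apply pow_le; lra. apply pow_lt; lra.
Qed.

Lemma qz_nonneg q s M : 0 < q < 1 -> 0 <= qzeta_trunc q s M.
Proof.
  intros Hq. revert M. induction s; intros M. simpl; lra.
  rewrite qz_cons. apply sumR_nonneg. intros j. apply Rmult_le_pos; auto.
  apply qterm_nonneg; auto; lia.
Qed.

Lemma qz_mono q s M : 0 < q < 1 -> qzeta_trunc q s M <= qzeta_trunc q s (S M).
Proof.
  intros Hq. destruct s. simpl; lra. rewrite !qz_cons. simpl (sumR _ (S M)).
  assert (0 <= qterm q n (S M) * qzeta_trunc q s M).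
  { apply Rmult_le_pos. apply qterm_nonneg; auto; lia. apply qz_nonneg; auto. } lra.
Qed.

Lemma qterm_geom q t p k : 0 < q < 1 -> 0 <= t < 1 -> (1 <= k)%nat ->
  is_series (fun e => t ^ e * qterm q (S e + p) k) (xk q k ^ p / Dt q t k).
Proof.
  intros Hq Ht Hk. pose proof (qint_ge1 q k Hq Hk).
  pose proof (xk_pos q k Hq Hk). pose proof (xk_le q k Hq Hk).
  pose proof (pow_1_le q k ltac:(lra)).
  assert (Hg : is_series (fun e => (t * xk q k) ^ e) (/ (1 - t * xk q k))).
  { apply is_series_geom. rewrite Rabs_pos_eq by nra. nra. }
  pose proof (isR_scal (/ qint q k * xk q k ^ p) _ _ Hg).
  eapply isR_ext; [|replace (xk q k ^ p / Dt q t k) with (/ qint q k * xk q k ^ p * / (1 - t * xk q k)); [exact H3|]].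
  - intros e. unfold qterm, xk. replace (S e + p - 1)%nat with (e + p)%nat by lia.
    rewrite Nat.mul_comm, pow_mult. unfold Rdiv.
    rewrite !Rpow_mult_distr, !pow_inv, pow_add. replace (S e + p)%nat with (S (e + p)) by lia.
    simpl. rewrite pow_add. field. repeat split; try apply pow_nonzero; lra.
  - pose proof (Dt_pos q t k Hq Ht Hk). unfold Dt, xk in *. field. split; lra.
Qed.

Lemma ex_abs_of (a : nat -> R) l : (forall n, 0 <= a n) -> is_series a l -> ex_series (fun n => Rabs (a n)).
Proof.
  intros H Ha. exists l. eapply isR_ext; [|exact Ha]. intros n. rewrite Rabs_pos_eq; auto.
Qed.

Lemma gen_step q t p d N : 0 < q < 1 -> 0 <= t < 1 ->
  (forall M, is_series (fun r => t ^ r * CS d (d + r) (fun l => qzeta_trunc q l M)) (Gt q t d M)) ->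
  is_series (fun r => t ^ r * CS (S d) (S d + r) (fun s => qzeta_trunc q (bumpp p s) N))
    (sumR (fun j => xk q (S j) ^ p / Dt q t (S j) * Gt q t d j) N).
Proof.
  intros Hq Ht IH.
  assert (Hj : forall j, is_series
     (fun r => sum_f_R0 (fun e => (t ^ e * qterm q (S e + p) (S j)) *
         (t ^ (r - e) * CS d (d + (r - e)) (fun l => qzeta_trunc q l j))) r)
     (xk q (S j) ^ p / Dt q t (S j) * Gt q t d j)).
  { intros j. apply (is_series_mult (fun e => t ^ e * qterm q (S e + p) (S j))
      (fun r => t ^ r * CS d (d + r) (fun l => qzeta_trunc q l j))).
    - apply qterm_geom; auto; lia.
    - apply IH.
    - apply (ex_abs_of _ _ (fun n => Rmult_le_pos _ _ (pow_le t n (proj1 Ht)) (qterm_nonneg q (S n + p) (S j) Hq ltac:(lia)))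
        (qterm_geom q t p (S j) Hq Ht ltac:(lia))).
    - apply (ex_abs_of _ _ (fun n => Rmult_le_pos _ _ (pow_le t n (proj1 Ht))
         (CS_nonneg d (d + n) _ (fun l => qz_nonneg q l j Hq)))
        (IH j)). }
  pose proof (isR_sum _ _ N Hj) as HS.
  eapply isR_ext; [|exact HS]. intros r.
  rewrite CS_shift.
  rewrite (sumR_ext _ (fun e => sumR (fun j => qterm q (S e + p) (S j) *
              CS d (d + (r - e)) (fun l => qzeta_trunc q l j)) N) (S r)).
  2: { intros e He. simpl bumpp. rewrite (CS_ext _ _ _ (fun l => sumR (fun j => qterm q (S e + p) (S j) * qzeta_trunc q l j) N)).
       2: { intros l. apply qz_cons. }
       rewrite CS_sumR. apply sumR_ext. intros j _. apply CS_scal. }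
  rewrite (sumR_ext _ (fun j => sumR (fun e => (t ^ e * qterm q (S e + p) (S j)) *
         (t ^ (r - e) * CS d (d + (r - e)) (fun l => qzeta_trunc q l j))) (S r)) N).
  2: { intros j _. apply sum_f_R0_sumR. }
  rewrite sumR_swap. rewrite <- sumR_scal. apply sumR_ext. intros e He.
  rewrite <- sumR_scal. apply sumR_ext. intros j _.
  replace (t ^ r) with (t ^ e * t ^ (r - e)). ring.
  rewrite <- pow_add. f_equal. lia.
Qed.

Lemma gen_inner q t d M : 0 < q < 1 -> 0 <= t < 1 ->
  is_series (fun r => t ^ r * CS d (d + r) (fun l => qzeta_trunc q l M)) (Gt q t d M).
Proof.
  intros Hq Ht. revert M. induction d; intros M.
  - replace (Gt q t 0 M) with (sumR (fun r => t ^ r * CS 0 (0 + r) (fun l => qzeta_trunc q l M)) 1)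
      by (simpl; ring).
    apply series_finite. intros j Hj. simpl. destruct j. lia. simpl. ring.
  - pose proof (gen_step q t 0 d M Hq Ht IHd).
    eapply isR_ext; [|replace (Gt q t (S d) M) with (sumR (fun j => xk q (S j) ^ 0 / Dt q t (S j) * Gt q t d j) M); [exact H|]].
    + intros r. cbv beta. f_equal. apply CS_ext. intros l. rewrite bumpp0. auto.
    + simpl. apply sumR_ext. intros. unfold Rdiv. ring.
Qed.

Definition Tq (q : R) (p d N r : nat) : R :=
  CS (S d) (S d + r) (fun s => qzeta_trunc q (bumpp p s) N).

Lemma Tq_0 q p d r : Tq q p d 0 r = 0.
Proof.
  unfold Tq. rewrite CS_shift. apply sumR_zero. intros i _.
  rewrite (CS_ext _ _ _ (fun _ => 0)). apply CS_zero.
  intros l. simpl bumpp. rewrite qz_cons. reflexivity.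
Qed.

Lemma Tq_mono q p d N r : 0 < q < 1 -> Tq q p d N r <= Tq q p d (S N) r.
Proof. intros Hq. unfold Tq. apply CS_mono. intros; apply qz_mono; auto. Qed.

Lemma Tq_nonneg q p d N r : 0 < q < 1 -> 0 <= Tq q p d N r.
Proof. intros Hq. unfold Tq. apply CS_nonneg. intros; apply qz_nonneg; auto. Qed.

Lemma gen_limit q t p d Phi : 0 < q < 1 -> 0 < t < 1 ->
  is_series (fun j => xk q (S j) ^ p / Dt q t (S j) * Gt q t d j) Phi ->
  (forall r, is_lim_seq (fun N => Tq q p d N r) (real (Lim_seq (fun N => Tq q p d N r)))) /\
  is_series (fun r => t ^ r * real (Lim_seq (fun N => Tq q p d N r))) Phi.
Proof.
  intros Hq Ht HPhi.
  assert (Ht' : 0 <= t < 1) by lra.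
  assert (HG : forall N, is_series (fun r => t ^ r * Tq q p d N r)
      (sumR (fun j => xk q (S j) ^ p / Dt q t (S j) * Gt q t d j) N)).
  { intros N. apply gen_step; auto. intros M. apply gen_inner; auto. }
  set (a := fun N r => t ^ r * (Tq q p d (S N) r - Tq q p d N r)).
  assert (Hpos : forall N r, 0 <= a N r).
  { intros N r. unfold a. apply Rmult_le_pos. apply pow_le; lra.
    pose proof (Tq_mono q p d N r Hq). lra. }
  assert (Hrow : forall N, is_series (a N) (xk q (S N) ^ p / Dt q t (S N) * Gt q t d N)).
  { intros N. pose proof (isR_minus _ _ _ _ (HG (S N)) (HG N)).
    eapply isR_ext; [|replace (xk q (S N) ^ p / Dt q t (S N) * Gt q t d N) with
       (sumR (fun j => xk q (S j) ^ p / Dt q t (S j) * Gt q t d j) (S N) -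
        sumR (fun j => xk q (S j) ^ p / Dt q t (S j) * Gt q t d j) N) by (simpl; ring); exact H].
    intros r. unfold a. ring. }
  destruct (fubini a _ _ Hpos Hrow HPhi) as [Hcol Hf].
  assert (Hr : forall r, exists V : R, is_lim_seq (fun N => Tq q p d N r) V /\ Series (fun N => a N r) = t ^ r * V).
  { intros r. assert (Htr : 0 < t ^ r) by (apply pow_lt; lra).
    assert (Hd : ex_series (fun N => Tq q p d (S N) r - Tq q p d N r)).
    { destruct (Hcol r) as [v Hv]. exists (/ t ^ r * v).
      eapply isR_ext; [|exact (isR_scal (/ t ^ r) _ _ Hv)]. intros N. unfold a. field. lra. }
    destruct Hd as [V HV]. exists V. split.
    - apply is_lim_seq_incr_1. apply series_lim in HV.
      eapply is_lim_seq_ext; [|exact HV]. intros M. rewrite sum_n_sumR.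
      induction M. simpl. rewrite Tq_0. ring. simpl sumR. simpl sumR in IHM. rewrite IHM. ring.
    - unfold a. rewrite Series_scal_l. f_equal. apply is_series_unique. auto. }
  split.
  - intros r. destruct (Hr r) as [V [HV _]]. rewrite (is_lim_seq_unique _ _ HV). simpl. auto.
  - eapply isR_ext; [|exact Hf]. intros r. destruct (Hr r) as [V [HV HS]].
    rewrite HS, (is_lim_seq_unique _ _ HV). reflexivity.
Qed.

Lemma series_tail (a : nat -> R) l n : is_series a l -> is_series (fun k => a (n + k)%nat) (l - sumR a n).
Proof.
  intros Ha0. assert (Ha1 : is_lim_seq (sum_n a) l) by exact Ha0. apply series_lim.
  pose proof (proj1 (is_lim_seq_incr_n _ n _) Ha1) as Ha.
  apply is_lim_seq_ext with (fun k => sum_n a (k + n) - sumR a n).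
  2: { apply is_lim_seq_minus'. exact Ha. apply is_lim_seq_const. }
  intros k. rewrite !sum_n_sumR. replace (S (k + n)) with (n + S k)%nat by lia.
  rewrite sumR_split. ring.
Qed.

Lemma series_abs_le (a b : nat -> R) la lb : (forall n, Rabs (a n) <= b n) ->
  is_series a la -> is_series b lb -> Rabs la <= lb.
Proof.
  intros H Ha Hb. apply Rabs_le. split.
  - pose proof (series_le (fun n => -1 * a n) b _ _ ltac:(intros n; specialize (H n); apply Rabs_le_between in H; lra)
       (isR_scal (-1) _ _ Ha) Hb). lra.
  - apply (series_le a b _ _ ltac:(intros n; specialize (H n); apply Rabs_le_between in H; lra) Ha Hb).
Qed.

Lemma coef_unique (L1 L2 : nat -> R) (f : R -> R) :
  (forall r, 0 <= L1 r) -> (forall r, 0 <= L2 r) ->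
  (forall t, 0 < t <= 1/2 -> is_series (fun r => t ^ r * L1 r) (f t) /\ is_series (fun r => t ^ r * L2 r) (f t)) ->
  forall r, L1 r = L2 r.
Proof.
  intros H1 H2 H.
  set (F := f (1/2)).
  assert (Hb : forall r, Rabs (L1 r - L2 r) <= F * 2 ^ r).
  { intros r. destruct (H (1/2) ltac:(lra)) as [Ha Hb].
    pose proof (term_le _ _ r (fun i => Rmult_le_pos _ _ (pow_le (1/2) i ltac:(lra)) (H1 i)) Ha).
    pose proof (term_le _ _ r (fun i => Rmult_le_pos _ _ (pow_le (1/2) i ltac:(lra)) (H2 i)) Hb).
    fold F in H0, H3.
    assert (E : (1/2) ^ r * 2 ^ r = 1). { rewrite <- Rpow_mult_distr. replace (1/2*2) with 1 by field. apply pow1. }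
    assert (0 < 2 ^ r) by (apply pow_lt; lra).
    assert (E1 : forall z, z = (1/2)^r * z * 2 ^ r).
    { intros z. transitivity (((1/2)^r * 2 ^ r) * z). rewrite E. ring. ring. }
    assert (L1 r <= F * 2 ^ r). { rewrite (E1 (L1 r)). nra. }
    assert (L2 r <= F * 2 ^ r). { rewrite (E1 (L2 r)). nra. }
    specialize (H1 r). specialize (H2 r). apply Rabs_le. split; lra. }
  assert (HF : 0 <= F). { pose proof (Hb 0%nat). simpl in H0. pose proof (Rabs_pos (L1 0%nat - L2 0%nat)). lra. }
  assert (Step : forall r, (forall j, (j < r)%nat -> L1 j - L2 j = 0) -> L1 r - L2 r = 0).
  { intros r Hj.
    set (K := 2 * F * 2 ^ S r).
    assert (HK : 0 <= K). { unfold K. pose proof (pow_lt 2 (S r) ltac:(lra)). nra. }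
    assert (Hle : forall t, 0 < t <= 1/4 -> Rabs (L1 r - L2 r) <= K * t).
    { intros t Ht. destruct (H t ltac:(lra)) as [Ha Hb'].
      pose proof (isR_minus _ _ _ _ Ha Hb') as Hs.
      replace (f t - f t) with 0 in Hs by ring.
      pose proof (series_tail _ _ (S r) Hs) as Htl.
      rewrite (sumR_ext _ (fun m => if (m =? r)%nat then t ^ r * (L1 r - L2 r) else 0)) in Htl.
      2: { intros i Hi. destruct (Nat.eqb_spec i r). subst. ring.
           rewrite <- Rmult_minus_distr_l. rewrite Hj by lia. ring. }
      simpl sumR in Htl. rewrite Nat.eqb_refl in Htl.
      rewrite sumR_zero in Htl. 2: { intros i Hi. destruct (Nat.eqb_spec i r). lia. auto. }
      assert (Hgeo : is_series (fun k => F * (2 * t) ^ S r * (2 * t) ^ k) (F * (2 * t) ^ S r * / (1 - 2 * t))).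
      { apply isR_scal. apply is_series_geom. rewrite Rabs_pos_eq; lra. }
      assert (Hbd : forall k, Rabs (t ^ (S r + k) * L1 (S r + k)%nat - t ^ (S r + k) * L2 (S r + k)%nat)
                   <= F * (2 * t) ^ S r * (2 * t) ^ k).
      { intros k. rewrite <- Rmult_minus_distr_l. rewrite Rabs_mult.
        rewrite (Rabs_pos_eq (t ^ _)) by (apply pow_le; lra).
        rewrite Rmult_assoc, <- pow_add, Rpow_mult_distr.
        pose proof (Hb (S r + k)%nat). pose proof (pow_lt t (S r + k) ltac:(lra)).
        replace (F * (2 ^ (S r + k) * t ^ (S r + k))) with (t ^ (S r + k) * (F * 2 ^ (S r + k))) by ring.
        apply Rmult_le_compat_l; lra. }
      pose proof (series_abs_le _ _ _ _ Hbd Htl Hgeo) as Hab.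
      replace (0 - (0 + t ^ r * (L1 r - L2 r))) with (- (t ^ r * (L1 r - L2 r))) in Hab by ring.
      rewrite Rabs_Ropp, Rabs_mult, (Rabs_pos_eq (t ^ r)) in Hab by (apply pow_le; lra).
      assert (Htr : 0 < t ^ r) by (apply pow_lt; lra).
      assert (H12 : / (1 - 2 * t) <= 2). { apply (Rmult_le_reg_r (1 - 2 * t)). lra.
        rewrite Rinv_l by lra. lra. }
      assert (Hp : 0 <= F * (2 * t) ^ S r) by (apply Rmult_le_pos; [lra| apply pow_le; lra]).
      assert (t ^ r * Rabs (L1 r - L2 r) <= t ^ r * (K * t)).
      { eapply Rle_trans. exact Hab. unfold K. simpl. rewrite Rpow_mult_distr.
        replace (F * (2 * t * (2 ^ r * t ^ r)) * / (1 - 2 * t)) with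
          ((F * (2 * t * (2 ^ r * t ^ r))) * / (1 - 2 * t)) by ring.
        assert (0 <= F * (2 * t * (2 ^ r * t ^ r))).
        { repeat apply Rmult_le_pos; try lra; apply pow_le; lra. }
        apply Rle_trans with ((F * (2 * t * (2 ^ r * t ^ r))) * 2). apply Rmult_le_compat_l; lra.
        right. ring. }
      apply Rmult_le_reg_l with (t ^ r); auto. }
    destruct (Req_dec (L1 r - L2 r) 0) as [E|E]; auto. exfalso.
    set (a := Rabs (L1 r - L2 r)). assert (Ha : 0 < a) by (apply Rabs_pos_lt; auto).
    set (t := Rmin (1/4) (a / (2 * (K + 1)))).
    assert (Ht1 : 0 < t). { unfold t. apply Rmin_pos. lra. apply Rdiv_lt_0_compat; lra. }
    assert (Ht2 : t <= 1/4) by apply Rmin_l.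
    assert (Ht3 : t <= a / (2 * (K + 1))) by apply Rmin_r.
    pose proof (Hle t ltac:(lra)). fold a in H0.
    assert (K * t <= (K + 1) * (a / (2 * (K + 1)))). { apply Rmult_le_compat; lra. }
    replace ((K + 1) * (a / (2 * (K + 1)))) with (a / 2) in H3 by (field; lra). lra. }
  assert (All : forall n j, (j <= n)%nat -> L1 j - L2 j = 0).
  { induction n; intros j Hj. apply Step. intros; exfalso; lia.
    destruct (Nat.eq_dec j (S n)). subst. apply Step. intros; apply IHn; lia. apply IHn; lia. }
  intros r. pose proof (All r r (le_n r)). lra.
Qed.

Lemma lim_lsum (G : list nat -> nat -> R) L :
  (forall s, In s L -> ex_finite_lim_seq (G s)) ->
  is_lim_seq (fun N => lsum (fun s => G s N) L) (lsum (fun s => real (Lim_seq (G s))) L).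
Proof.
  induction L as [|a L IH]; intros H.
  - unfold lsum; simpl. apply is_lim_seq_const.
  - unfold lsum in *; simpl. apply is_lim_seq_plus'.
    + apply Lim_seq_correct'. apply H. simpl; auto.
    + apply IH. intros s Hs. apply H. simpl; auto.
Qed.

Lemma bump_bumpp l : bump_first l = bumpp 1 l.
Proof. destruct l; simpl; auto. rewrite Nat.add_1_r. auto. Qed.

Theorem corollary3p3 (q : R) (n k : nat) :
  0 < q < 1 -> (1 <= n)%nat -> (n <= k)%nat ->
  (forall s, In s (compositions n k) -> qzeta_converges q (bump_first s)) /\
  qzeta_converges q [S k] /\
  fold_right Rplus 0 (map (fun s => qzeta q (bump_first s)) (compositions n k))
    = qzeta q [S k].
Proof.
  intros Hq Hn Hnk.
  destruct n as [|d]; [lia|].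
  assert (Hk : exists r, k = (S d + r)%nat) by (exists (k - S d)%nat; lia).
  destruct Hk as [r ->]. clear Hn Hnk.
  set (L1 := fun r => real (Lim_seq (fun N => Tq q 1 d N r))).
  set (L2 := fun r => real (Lim_seq (fun N => Tq q (S d) 0 N r))).
  set (f := fun t => Series (fun l => xk q (S l) ^ S d / Dt q t (S l))).
  assert (Hf : forall t, 0 < t <= 1/2 ->
     (forall r, is_lim_seq (fun N => Tq q 1 d N r) (L1 r)) /\
     (forall r, is_lim_seq (fun N => Tq q (S d) 0 N r) (L2 r)) /\
     is_series (fun r => t ^ r * L1 r) (f t) /\ is_series (fun r => t ^ r * L2 r) (f t)).
  { intros t Ht. assert (Ht' : 0 <= t < 1) by lra.
    assert (Hr : is_series (fun l => xk q (S l) ^ S d / Dt q t (S l)) (f t)).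
    { apply Series_correct. apply ex_rhs; auto; lia. }
    assert (H2 : is_series (fun j => xk q (S j) ^ S d / Dt q t (S j) * Gt q t 0 j) (f t)).
    { eapply isR_ext; [|exact Hr]. intros j. simpl. ring. }
    assert (H1 : is_series (fun j => xk q (S j) ^ 1 / Dt q t (S j) * Gt q t d j) (f t)).
    { pose proof (Phi_eq q t d (f t) Hq Ht' Hr). eapply isR_ext; [|exact H].
      intros j. unfold Rdiv. ring. }
    destruct (gen_limit q t 1 d (f t) Hq ltac:(lra) H1) as [A1 B1].
    destruct (gen_limit q t (S d) 0 (f t) Hq ltac:(lra) H2) as [A2 B2].
    repeat split; auto. }
  destruct (Hf (1/4) ltac:(lra)) as [HL1 [HL2 _]].
  assert (Hnn : forall p d' r, (forall r, is_lim_seq (fun N => Tq q p d' N r) (real (Lim_seq (fun N => Tq q p d' N r)))) ->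
     0 <= real (Lim_seq (fun N => Tq q p d' N r))).
  { intros p d' r' H. pose proof (is_lim_seq_incr_compare _ _ (H r') (fun N => Tq_mono q p d' N r' Hq) 0%nat).
    pose proof (Tq_nonneg q p d' 0 r' Hq). lra. }
  assert (Heq : forall r, L1 r = L2 r).
  { apply (coef_unique L1 L2 f).
    - intros r'. apply Hnn. exact HL1.
    - intros r'. apply Hnn. exact HL2.
    - intros t Ht. destruct (Hf t Ht) as [_ [_ [A B]]]. auto. }
  assert (Hlink1 : forall N, Tq q 1 d N r = lsum (fun s => qzeta_trunc q (bump_first s) N) (compositions (S d) (S d + r))).
  { intros N. unfold compositions. rewrite comp_CS by lia. unfold Tq. apply CS_ext.
    intros l. rewrite bump_bumpp. reflexivity. }
  assert (Hlink2 : forall N, Tq q (S d) 0 N r = qzeta_trunc q [S (S d + r)] N).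
  { intros N. unfold Tq. replace (S 0 + r)%nat with (S r) by lia. rewrite CS_one. simpl bumpp.
    replace (r + S d)%nat with (S d + r)%nat by lia. reflexivity. }
  assert (Hconv : forall s, In s (compositions (S d) (S d + r)) -> ex_finite_lim_seq (qzeta_trunc q (bump_first s))).
  { intros s Hs. apply (ex_finite_lim_seq_incr _ (L1 r)).
    - intros N. apply qz_mono; auto.
    - intros N. eapply Rle_trans.
      2: { apply (is_lim_seq_incr_compare _ _ (HL1 r) (fun N => Tq_mono q 1 d N r Hq) N). }
      rewrite Hlink1. apply (lsum_in (fun s => qzeta_trunc q (bump_first s) N)); auto.
      intros; apply qz_nonneg; auto. }
  split; [|split].
  - intros s Hs. apply Hconv; auto.
  - exists (L2 r). eapply is_lim_seq_ext; [|exact (HL2 r)]. intros N. apply Hlink2.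
  - pose proof (lim_lsum (fun s N => qzeta_trunc q (bump_first s) N) _ Hconv) as HA.
    assert (HB : is_lim_seq (fun N => lsum (fun s => qzeta_trunc q (bump_first s) N) (compositions (S d) (S d + r))) (L1 r)).
    { eapply is_lim_seq_ext; [|exact (HL1 r)]. intros N. apply Hlink1. }
    pose proof (is_lim_seq_unique _ _ HA). pose proof (is_lim_seq_unique _ _ HB).
    rewrite H in H0. injection H0 as H0.
    transitivity (L1 r). exact H0. rewrite Heq. unfold L2, qzeta. f_equal. apply Lim_seq_ext. intros N. apply Hlink2.
Qed.
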